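(* Let $\mathbb{X}=\ell_p^2$ (the real space $\mathbb{R}^2$ with the $p$-norm), where $p\in\mathbb{N}$ and $p>2$. Let $T\in\mathbb{L}(\mathbb{X},\mathbb{X})$ be an isometry. Then there exists $\epsilon_0>0$ such that for every $0<\epsilon<\epsilon_0$, $T$ is the only uniform $\epsilon$-BPB approximation of $T$.
   Context: $S_{\mathbb{X}}$ is the unit sphere. For $T\in\mathbb{L}(\mathbb{X},\mathbb{X})$ with $\|T\|=1$ and fixed $\epsilon>0$, an operator $A\in\mathbb{L}(\mathbb{X},\mathbb{X})$ with $\|A\|=1$ is a uniform $\epsilon$-BPB approximation of $T$ if there exists $\delta(\epsilon)>0$ such that whenever $x_0\in S_{\mathbb{X}}$ satisfies $\|Tx_0\|>1-\delta(\epsilon)$, there exists $u_0\in S_{\mathbb{X}}$ with $\|Au_0\|=1$, $\|u_0-x_0\|<\epsilon$ and $\|A-T\|<\epsilon$. *)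

(* Defs.v *)
From Stdlib Require Import Reals.
Open Scope R_scope.

Definition vec := (R * R)%type.

Definition vsub (u v : vec) : vec := (fst u - fst v, snd u - snd v).

Definition pnorm (p : nat) (v : vec) : R :=
  let s := Rabs (fst v) ^ p + Rabs (snd v) ^ p in
  if Rlt_dec 0 s then Rpower s (/ INR p) else 0.

Record op := Op { m11 : R; m12 : R; m21 : R; m22 : R }.

Definition app (A : op) (v : vec) : vec :=
  (m11 A * fst v + m12 A * snd v, m21 A * fst v + m22 A * snd v).

Definition osub (A B : op) : op :=
  Op (m11 A - m11 B) (m12 A - m12 B) (m21 A - m21 B) (m22 A - m22 B).

Definition sphere (p : nat) (v : vec) : Prop := pnorm p v = 1.

Definition opnorm_is (p : nat) (A : op) (r : R) : Prop :=
  is_lub (fun t => exists v, sphere p v /\ t = pnorm p (app A v)) r.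

Definition isometry (p : nat) (T : op) : Prop :=
  forall v, pnorm p (app T v) = pnorm p v.

(* A is a uniform eps-BPB approximation of T (T assumed of norm 1). *)
Definition uniform_BPB_approx (p : nat) (eps : R) (T A : op) : Prop :=
  opnorm_is p A 1 /\
  exists delta, 0 < delta /\
    forall x0, sphere p x0 -> pnorm p (app T x0) > 1 - delta ->
      exists u0, sphere p u0 /\ pnorm p (app A u0) = 1 /\
        pnorm p (vsub u0 x0) < eps /\
        exists r, opnorm_is p (osub A T) r /\ r < eps.

(* Main.v *)
Require Import Defs.
From Stdlib Require Import Reals Lra Lia ClassicalEpsilon.
From Coquelicot Require Import Coquelicot.
Import Defs.
Open Scope R_scope.


Lemma pow_lt_S (x y : R) (n : nat) : 0 <= x -> x < y -> x ^ (S n) < y ^ (S n).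
Proof.
  intros Hx Hxy. induction n as [|n IH].
  - simpl. lra.
  - change (x ^ S (S n)) with (x * x ^ S n). change (y ^ S (S n)) with (y * y ^ S n).
    assert (0 <= x ^ S n) by (apply pow_le; lra).
    nra.
Qed.

Lemma pow_inj_nonneg (x y : R) (n : nat) : 0 <= x -> 0 <= y -> x ^ (S n) = y ^ (S n) -> x = y.
Proof.
  intros Hx Hy H. destruct (Rtotal_order x y) as [H1|[H1|H1]]; auto.
  - pose proof (pow_lt_S x y n Hx H1). lra.
  - pose proof (pow_lt_S y x n Hy H1). lra.
Qed.

Definition sp (p : nat) (v : vec) : R := Rabs (fst v) ^ p + Rabs (snd v) ^ p.

Lemma sp_nonneg p v : 0 <= sp p v.
Proof. unfold sp. pose proof (pow_le (Rabs (fst v)) p (Rabs_pos _)).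
  pose proof (pow_le (Rabs (snd v)) p (Rabs_pos _)). lra. Qed.

Lemma pnorm_nonneg p v : 0 <= pnorm p v.
Proof. unfold pnorm. destruct (Rlt_dec _ _). unfold Rpower. left; apply exp_pos. lra. Qed.

Lemma pnorm_pow p v : (0 < p)%nat -> pnorm p v ^ p = sp p v.
Proof.
  intros Hp. unfold pnorm. fold (sp p v). destruct (Rlt_dec 0 (sp p v)) as [H|H].
  - rewrite <- Rpower_pow by (unfold Rpower; apply exp_pos).
    rewrite Rpower_mult. rewrite Rinv_l. apply Rpower_1; auto.
    apply not_0_INR; lia.
  - pose proof (sp_nonneg p v). destruct p; [lia|]. simpl. lra.
Qed.

Lemma pnorm_coord1 p v : (0 < p)%nat -> Rabs (fst v) <= pnorm p v.
Proof.
  intros Hp. destruct (Rle_lt_dec (Rabs (fst v)) (pnorm p v)) as [H|H]; auto.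
  exfalso. pose proof (pnorm_pow p v Hp). unfold sp in H0.
  destruct p as [|q]; [lia|].
  pose proof (pow_lt_S _ _ q (pnorm_nonneg (S q) v) H).
  pose proof (pow_le (Rabs (snd v)) (S q) (Rabs_pos _)). lra.
Qed.

Lemma pnorm_coord2 p v : (0 < p)%nat -> Rabs (snd v) <= pnorm p v.
Proof.
  intros Hp. destruct (Rle_lt_dec (Rabs (snd v)) (pnorm p v)) as [H|H]; auto.
  exfalso. pose proof (pnorm_pow p v Hp). unfold sp in H0.
  destruct p as [|q]; [lia|].
  pose proof (pow_lt_S _ _ q (pnorm_nonneg (S q) v) H).
  pose proof (pow_le (Rabs (fst v)) (S q) (Rabs_pos _)). lra.
Qed.

Lemma pnorm_of_sp1 p v : sp p v = 1 -> pnorm p v = 1.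
Proof.
  intros H. unfold pnorm. fold (sp p v). rewrite H.
  destruct (Rlt_dec 0 1); [|lra]. unfold Rpower. rewrite ln_1, Rmult_0_r. apply exp_0.
Qed.

Lemma sp_of_pnorm1 p v : (0 < p)%nat -> pnorm p v = 1 -> sp p v = 1.
Proof. intros Hp H. rewrite <- pnorm_pow by auto. rewrite H. apply pow1. Qed.

Lemma pnorm_zero p v : (0 < p)%nat -> fst v = 0 -> snd v = 0 -> pnorm p v = 0.
Proof.
  intros Hp H1 H2. unfold pnorm. rewrite H1, H2, Rabs_R0.
  destruct p; [lia|]. simpl. rewrite Rmult_0_l, Rplus_0_r.
  destruct (Rlt_dec 0 0); [lra|auto].
Qed.

Lemma pnorm_pos p v : (0 < p)%nat -> (fst v <> 0 \/ snd v <> 0) -> 0 < pnorm p v.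
Proof.
  intros Hp H. destruct (pnorm_nonneg p v) as [H0|H0]; auto. exfalso.
  pose proof (pnorm_pow p v Hp). rewrite <- H0 in H1. destruct p as [|q]; [lia|].
  simpl in H1. rewrite Rmult_0_l in H1. unfold sp in H1.
  pose proof (pow_le (Rabs (fst v)) (S q) (Rabs_pos _)).
  pose proof (pow_le (Rabs (snd v)) (S q) (Rabs_pos _)).
  destruct H as [H|H].
  - pose proof (pow_lt_S 0 (Rabs (fst v)) q (Rle_refl 0) (Rabs_pos_lt _ H)).
    rewrite pow_i in H4 by lia. lra.
  - pose proof (pow_lt_S 0 (Rabs (snd v)) q (Rle_refl 0) (Rabs_pos_lt _ H)).
    rewrite pow_i in H4 by lia. lra.
Qed.

Fixpoint IsPoly (n : nat) (f : R -> R) : Prop :=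
  match n with
  | O => exists c, forall t, f t = c
  | S m => forall r, exists g, IsPoly m g /\ forall t, f t = f r + (t - r) * g t
  end.

Lemma poly_ext n f g : (forall t, f t = g t) -> IsPoly n f -> IsPoly n g.
Proof.
  destruct n as [|m]; simpl; intros E H.
  - destruct H as [c Hc]. exists c. intros t. rewrite <- E. auto.
  - intros r. destruct (H r) as [h [Hh Eh]]. exists h. split; auto.
    intros t. rewrite <- !E. auto.
Qed.

Lemma poly_const n c : IsPoly n (fun _ => c).
Proof.
  revert c; induction n as [|n IH]; intros c; simpl.
  - exists c; auto.
  - intros r. exists (fun _ : R => 0%R). split; [apply IH|intros; cbv beta; ring].
Qed.

Lemma poly_add n f g : IsPoly n f -> IsPoly n g -> IsPoly n (fun t => f t + g t).
Proof.
  revert f g. induction n as [|n IH]; simpl; intros f g Hf Hg.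
  - destruct Hf as [c Hc], Hg as [d Hd]. exists (c + d). intros; rewrite Hc, Hd; auto.
  - intros r. destruct (Hf r) as [f1 [Hf1 Ef]], (Hg r) as [g1 [Hg1 Eg]].
    exists (fun t => f1 t + g1 t). split; auto. intros t. rewrite (Ef t), (Eg t). ring.
Qed.

Lemma poly_scale n c f : IsPoly n f -> IsPoly n (fun t => c * f t).
Proof.
  revert f. induction n as [|n IH]; simpl; intros f Hf.
  - destruct Hf as [d Hd]. exists (c * d). intros; rewrite Hd; auto.
  - intros r. destruct (Hf r) as [f1 [Hf1 Ef]].
    exists (fun t => c * f1 t). split; auto. intros t. rewrite (Ef t). ring.
Qed.

Lemma poly_mono n f : IsPoly n f -> IsPoly (S n) f.
Proof.
  revert f. induction n as [|n IH]; intros f Hf.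
  - simpl in *. destruct Hf as [c Hc]. intros r. exists (fun _ : R => 0%R). split.
    + exists 0; auto.
    + intros t. rewrite !Hc. ring.
  - intros r. destruct (Hf r) as [g [Hg Eg]]. exists g. split; auto.
Qed.

Lemma poly_mul_lin n a b f : IsPoly n f -> IsPoly (S n) (fun t => (a + b * t) * f t).
Proof.
  revert f. induction n as [|n IH]; intros f Hf.
  - simpl in Hf. destruct Hf as [c Hc]. simpl. intros r. exists (fun _ : R => (b * c)%R). split.
    + exists (b * c); auto.
    + intros t. rewrite !Hc. ring.
  - intros r. destruct (Hf r) as [f1 [Hf1 Ef]].
    exists (fun t => (a + b * t) * f1 t + b * f r). split.
    + apply poly_add. apply IH; auto. apply poly_const.
    + intros t. rewrite (Ef t). ring.
Qed.

Lemma poly_pow_lin a b k : IsPoly k (fun t => (a + b * t) ^ k).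
Proof.
  induction k as [|k IH].
  - apply (poly_const 0 1).
  - apply poly_ext with (f := fun t => (a + b * t) * (a + b * t) ^ k).
    + intros; simpl; ring.
    + apply poly_mul_lin; auto.
Qed.

Lemma poly_le n m f : (n <= m)%nat -> IsPoly n f -> IsPoly m f.
Proof. induction 1; auto. intros; apply poly_mono; auto. Qed.

Lemma poly_roots n f (r : nat -> R) : IsPoly n f ->
  (forall i, (i <= n)%nat -> f (r i) = 0) ->
  (forall i j, (i <= n)%nat -> (j <= n)%nat -> i <> j -> r i <> r j) ->
  forall t, f t = 0.
Proof.
  revert f r. induction n as [|n IH]; intros f r Hf Hz Hd t.
  - simpl in Hf. destruct Hf as [c Hc]. rewrite Hc. rewrite <- (Hc (r 0%nat)). apply Hz; lia.
  - simpl in Hf. destruct (Hf (r 0%nat)) as [g [Hg Eg]].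
    assert (G : forall t, g t = 0).
    { apply (IH g (fun i => r (S i)) Hg).
      - intros i Hi. pose proof (Hz (S i) ltac:(lia)). rewrite Eg in H.
        rewrite (Hz 0%nat ltac:(lia)) in H.
        assert (r (S i) - r 0%nat <> 0).
        { intro E. apply (Hd (S i) 0%nat); try lia. lra. }
        destruct (Rmult_integral _ _ (eq_trans (eq_sym (Rplus_0_l _)) H)); [contradiction|auto].
      - intros i j Hi Hj Hij. apply Hd; lia. }
    rewrite Eg, G, (Hz 0%nat ltac:(lia)). ring.
Qed.

Definition Qf (p : nat) (a b c d t : R) : R := (a + b * t) ^ p + (c + d * t) ^ p - 1 - t ^ p.

Lemma Qf_poly p a b c d : IsPoly p (Qf p a b c d).
Proof.
  apply poly_ext with (f := fun t => ((a + b * t) ^ p + (c + d * t) ^ p) + ((fun _ => -1) t + (-1) * (0 + 1 * t) ^ p)).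
  - intros t. unfold Qf. cbv beta. replace (0 + 1 * t) with t by ring. ring.
  - apply poly_add. apply poly_add; apply poly_pow_lin.
    apply poly_add. apply poly_const. apply poly_scale. apply poly_pow_lin.
Qed.

Lemma Qf_deriv p a b c d : (2 < p)%nat -> (forall t, Qf p a b c d t = 0) ->
  b * a ^ (p - 1) + d * c ^ (p - 1) = 0.
Proof.
  intros Hp HQ.
  assert (D : is_derive (fun t => (a+b*t)^p + (c+d*t)^p - 1 - t^p) 0
     (INR p * b * a^(p-1) + INR p * d * c^(p-1) - INR p * 0^(p-1))).
  { auto_derive. trivial. replace (Init.Nat.pred p) with (p - 1)%nat by lia. rewrite !Rmult_0_r, !Rplus_0_r. set (u1 := a ^ (p-1)). set (u2 := c ^ (p-1)). set (u3 := 0 ^ (p-1)). ring. }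
  assert (D2 : is_derive (fun _ : R => 0) 0
     (INR p * b * a^(p-1) + INR p * d * c^(p-1) - INR p * 0^(p-1))).
  { eapply is_derive_ext; [|exact D]. intros t. apply HQ. }
  apply is_derive_unique in D2. rewrite Derive_const in D2.
  rewrite pow_i in D2 by lia.
  assert (INR p <> 0) by (apply not_0_INR; lia).
  apply (Rmult_eq_reg_l (INR p)); auto. rewrite Rmult_0_r. rewrite D2. ring.
Qed.

Lemma final_alg p a b c d : (2 < p)%nat -> 1/2 < a -> 1/2 < d -> Rabs b < 1/2 -> Rabs c < 1/2 ->
  b * a ^ (p - 1) + d * c ^ (p - 1) = 0 ->
  a * b ^ (p - 1) + c * d ^ (p - 1) = 0 ->
  a ^ p + c ^ p = 1 -> b ^ p + d ^ p = 1 ->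
  a = 1 /\ b = 0 /\ c = 0 /\ d = 1.
Proof.
  intros Hp Ha Hd Hb Hc E1 E2 E3 E4.
  destruct p as [|[|[|k]]]; try lia.
  replace (S (S (S k)) - 1)%nat with (S (S k)) in E1, E2 by lia.
  assert (Hbc : b = 0 /\ c = 0).
  { destruct (Req_dec b 0) as [Hb0|Hb0].
    - split; auto. subst b. rewrite pow_i in E2 by lia.
      assert (0 < d ^ S (S k)) by (apply pow_lt; lra).
      destruct (Rmult_integral c (d ^ S (S k))); [lra|auto|lra].
    - destruct (Req_dec c 0) as [Hc0|Hc0].
      + exfalso. subst c. rewrite pow_i in E1 by lia.
        assert (0 < a ^ S (S k)) by (apply pow_lt; lra).
        destruct (Rmult_integral b (a ^ S (S k))); [lra|auto|lra].
      + exfalso.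
        set (x := Rabs b). set (y := Rabs c).
        assert (Hx : 0 < x) by (apply Rabs_pos_lt; auto).
        assert (Hy : 0 < y) by (apply Rabs_pos_lt; auto).
        assert (F1 : x * a ^ S (S k) = d * y ^ S (S k)).
        { unfold x, y. rewrite (RPow_abs c). rewrite <- (Rabs_pos_eq a) by lra.
          rewrite <- (Rabs_pos_eq d) by lra. rewrite RPow_abs. rewrite <- !Rabs_mult.
          replace (b * a ^ S (S k)) with (- (d * c ^ S (S k))) by lra. apply Rabs_Ropp. }
        assert (F2 : y * d ^ S (S k) = a * x ^ S (S k)).
        { unfold x, y. rewrite (RPow_abs b). rewrite <- (Rabs_pos_eq a) by lra.
          rewrite <- (Rabs_pos_eq d) by lra. rewrite RPow_abs. rewrite <- !Rabs_mult.
          replace (c * d ^ S (S k)) with (- (a * b ^ S (S k))) by lra. apply Rabs_Ropp. }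
        assert (G1 : y ^ S k < a ^ S k) by (apply pow_lt_S; [lra| unfold y; lra]).
        assert (G2 : x ^ S k < d ^ S k) by (apply pow_lt_S; [lra| unfold x; lra]).
        assert (P1 : 0 < a ^ S k) by (apply pow_lt; lra).
        assert (P2 : 0 < d ^ S k) by (apply pow_lt; lra).
        change (a ^ S (S k)) with (a * a ^ S k) in F1.
        change (y ^ S (S k)) with (y * y ^ S k) in F1.
        change (d ^ S (S k)) with (d * d ^ S k) in F2.
        change (x ^ S (S k)) with (x * x ^ S k) in F2.
        assert (H1 : x * a < d * y).
        { assert (L : d * y * y ^ S k < d * y * a ^ S k) by (apply Rmult_lt_compat_l; nra).
          destruct (Rlt_or_le (x * a) (d * y)) as [Q|Q]; auto. exfalso.
          assert (M : 0 <= (x * a - d * y) * a ^ S k) by (apply Rmult_le_pos; lra).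
          assert (E : (x * a - d * y) * a ^ S k = x * (a * a ^ S k) - d * y * a ^ S k) by ring.
          assert (E' : d * (y * y ^ S k) = d * y * y ^ S k) by ring.
          lra. }
        assert (H2 : y * d < a * x).
        { assert (L : a * x * x ^ S k < a * x * d ^ S k) by (apply Rmult_lt_compat_l; nra).
          destruct (Rlt_or_le (y * d) (a * x)) as [Q|Q]; auto. exfalso.
          assert (M : 0 <= (y * d - a * x) * d ^ S k) by (apply Rmult_le_pos; lra).
          assert (E : (y * d - a * x) * d ^ S k = y * (d * d ^ S k) - a * x * d ^ S k) by ring.
          assert (E' : a * (x * x ^ S k) = a * x * x ^ S k) by ring.
          lra. }
        lra. }
  destruct Hbc as [Hb0 Hc0]. subst b c.
  rewrite pow_i in E3, E4 by lia. rewrite Rplus_0_r in E3. rewrite Rplus_0_l in E4.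
  repeat split; auto.
  - apply (pow_inj_nonneg _ _ (S (S k))); try lra. rewrite E3, pow1. auto.
  - apply (pow_inj_nonneg _ _ (S (S k))); try lra. rewrite E4, pow1. auto.
Qed.

Lemma iso_kill p T v : (0 < p)%nat -> isometry p T -> (fst v <> 0 \/ snd v <> 0) ->
  fst (app T v) = 0 -> snd (app T v) = 0 -> False.
Proof.
  intros Hp hT Hv H1 H2. pose proof (hT v). rewrite pnorm_zero in H by auto.
  pose proof (pnorm_pos p v Hp Hv). lra.
Qed.

Ltac fin_det := simpl; solve [nra | left; lra | right; lra | left; auto | right; auto].

Lemma iso_det p T : (0 < p)%nat -> isometry p T -> m11 T * m22 T - m12 T * m21 T <> 0.
Proof.
  intros Hp hT H0.
  destruct (Req_dec (m21 T) 0) as [E21|E21]; destruct (Req_dec (m22 T) 0) as [E22|E22].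
  - destruct (Req_dec (m11 T) 0) as [E11|E11]; destruct (Req_dec (m12 T) 0) as [E12|E12].
    + apply (iso_kill p T (1, 0)); auto; simpl; [left; lra | rewrite E11, E12; ring | rewrite E21, E22; ring].
    + apply (iso_kill p T (m12 T, - m11 T)); auto; fin_det.
    + apply (iso_kill p T (m12 T, - m11 T)); auto; fin_det.
    + apply (iso_kill p T (m12 T, - m11 T)); auto; fin_det.
  - apply (iso_kill p T (m22 T, - m21 T)); auto; fin_det.
  - apply (iso_kill p T (m22 T, - m21 T)); auto; fin_det.
  - apply (iso_kill p T (m22 T, - m21 T)); auto; fin_det.
Qed.

Lemma opnorm_bound p M r v : opnorm_is p M r -> sphere p v -> pnorm p (app M v) <= r.
Proof. intros [Hub _] Sv. apply Hub. exists v. split; auto. Qed.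

Lemma root_from p a b c d x y : (0 < p)%nat -> 0 < x -> 0 < y ->
  0 < a * x + b * y -> 0 < c * x + d * y ->
  Rabs (a * x + b * y) ^ p + Rabs (c * x + d * y) ^ p = Rabs x ^ p + Rabs y ^ p ->
  Qf p a b c d (y / x) = 0.
Proof.
  intros Hp Hx Hy H1 H2 E.
  rewrite !Rabs_pos_eq in E by lra.
  set (tau := y / x).
  assert (Ey : y = x * tau) by (unfold tau; field; lra).
  rewrite Ey in E.
  replace (a * x + b * (x * tau)) with (x * (a + b * tau)) in E by ring.
  replace (c * x + d * (x * tau)) with (x * (c + d * tau)) in E by ring.
  rewrite !Rpow_mult_distr in E.
  assert (Px : 0 < x ^ p) by (apply pow_lt; lra).
  unfold Qf.
  set (X := x ^ p) in *. set (U := (a + b * tau) ^ p) in *. set (V := (c + d * tau) ^ p) in *.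
  set (W := tau ^ p) in *.
  apply (Rmult_eq_reg_l X); [|lra]. rewrite Rmult_0_r.
  replace (X * (U + V - 1 - W)) with (X * U + X * V - (X + X * W)) by ring. lra.
Qed.

Lemma sphere_e1 p : (0 < p)%nat -> sphere p (1, 0).
Proof. intros Hp. unfold sphere. apply pnorm_of_sp1. unfold sp; simpl.
  rewrite Rabs_R1, Rabs_R0, pow1, pow_i by auto. ring. Qed.

Lemma sphere_e2 p : (0 < p)%nat -> sphere p (0, 1).
Proof. intros Hp. unfold sphere. apply pnorm_of_sp1. unfold sp; simpl.
  rewrite Rabs_R1, Rabs_R0, pow1, pow_i by auto. ring. Qed.

Theorem theorem2p9 (p : nat) (hp : (2 < p)%nat) (T : op) (hT : isometry p T) :
  exists eps0, 0 < eps0 /\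
    forall eps, 0 < eps -> eps < eps0 ->
      forall A : op, uniform_BPB_approx p eps T A <-> A = T.
Proof.
  assert (Hp0 : (0 < p)%nat) by lia.
  assert (HpR : 3 <= INR p).
  { replace 3 with (INR 3) by (simpl; ring). apply le_INR; lia. }
  exists (/ (32 * INR p)). split; [apply Rinv_0_lt_compat; lra|].
  intros eps He He0 A. split.
  - intros [HA [delta [Hdel H]]].
    pose proof (iso_det p T Hp0 hT) as HD.
    destruct T as [t11 t12 t21 t22], A as [a11 a12 a21 a22]. simpl in HD.
    set (D := t11 * t22 - t12 * t21) in HD.
    set (a := (t22 * a11 - t12 * a21) / D).
    set (b := (t22 * a12 - t12 * a22) / D).
    set (c := (t11 * a21 - t21 * a11) / D).
    set (d := (t11 * a22 - t21 * a12) / D).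
    assert (Ia : a11 = t11 * a + t12 * c) by (unfold a, c, D in *; field; auto).
    assert (Ic : a21 = t21 * a + t22 * c) by (unfold a, c, D in *; field; auto).
    assert (Ib : a12 = t11 * b + t12 * d) by (unfold b, d, D in *; field; auto).
    assert (Id : a22 = t21 * b + t22 * d) by (unfold b, d, D in *; field; auto).
    clearbody a b c d.
    assert (HB : forall v, pnorm p (app (Op a11 a12 a21 a22) v)
                           = pnorm p (a * fst v + b * snd v, c * fst v + d * snd v)).
    { intros v. rewrite <- (hT (a * fst v + b * snd v, c * fst v + d * snd v)).
      unfold app; simpl. f_equal. rewrite Ia, Ib, Ic, Id. f_equal; ring. }
    pose proof (sphere_e1 p Hp0) as Se1. pose proof (sphere_e2 p Hp0) as Se2.
    assert (HT1 : pnorm p (app (Op t11 t12 t21 t22) (1, 0)) > 1 - delta).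
    { rewrite hT. unfold sphere in Se1. lra. }
    destruct (H (1, 0) Se1 HT1) as [_ [_ [_ [_ [r [Hr Hre]]]]]].
    assert (S1 : pnorm p (a - 1, c) < eps).
    { pose proof (opnorm_bound _ _ _ _ Hr Se1).
      rewrite <- (hT (a - 1, c)).
      replace (app (Op t11 t12 t21 t22) (a - 1, c))
        with (app (osub (Op a11 a12 a21 a22) (Op t11 t12 t21 t22)) (1, 0)).
      lra. unfold app, osub; simpl. rewrite Ia, Ic. f_equal; ring. }
    assert (S2 : pnorm p (b, d - 1) < eps).
    { pose proof (opnorm_bound _ _ _ _ Hr Se2).
      rewrite <- (hT (b, d - 1)).
      replace (app (Op t11 t12 t21 t22) (b, d - 1))
        with (app (osub (Op a11 a12 a21 a22) (Op t11 t12 t21 t22)) (0, 1)).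
      lra. unfold app, osub; simpl. rewrite Ib, Id. f_equal; ring. }
    pose proof (pnorm_coord1 p _ Hp0 : Rabs (fst (a - 1, c)) <= _) as Ca. simpl in Ca.
    pose proof (pnorm_coord2 p _ Hp0 : Rabs (snd (a - 1, c)) <= _) as Cc. simpl in Cc.
    pose proof (pnorm_coord1 p _ Hp0 : Rabs (fst (b, d - 1)) <= _) as Cb. simpl in Cb.
    pose proof (pnorm_coord2 p _ Hp0 : Rabs (snd (b, d - 1)) <= _) as Cd. simpl in Cd.
    assert (Heps : eps < 1 / 96).
    { assert (/ (32 * INR p) <= / (32 * 3)) by (apply Rinv_le_contravar; lra). lra. }
    assert (Ra := Rabs_def2 (a - 1) eps ltac:(lra)).
    assert (Rb := Rabs_def2 b eps ltac:(lra)).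
    assert (Rc := Rabs_def2 c eps ltac:(lra)).
    assert (Rd := Rabs_def2 (d - 1) eps ltac:(lra)).
    set (tk := fun k : nat => 1 / 2 + INR k / (2 * INR p)).
    assert (Hq : / (32 * INR p) * 8 = / (4 * INR p)) by (field; lra).
    assert (Hex : forall k, exists tau, (k <= p)%nat ->
              Qf p a b c d tau = 0 /\ Qf p b a d c (/ tau) = 0 /\ 0 < tau /\
              Rabs (tau - tk k) < / (4 * INR p)).
    { intros k. destruct (Compare_dec.le_dec k p) as [Hk|Hk]; [|exists 0; intros; lia].
      set (t := tk k).
      assert (Ht : 1 / 2 <= t <= 1).
      { unfold t, tk. assert (0 <= INR k <= INR p) by (split; [apply pos_INR|apply le_INR; auto]).
        assert (INR k / (2 * INR p) <= 1 / 2).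
        { apply (Rmult_le_reg_r (2 * INR p)); [lra|]. unfold Rdiv.
          rewrite Rmult_assoc, Rinv_l by lra. lra. }
        assert (0 <= INR k / (2 * INR p)) by (unfold Rdiv; apply Rmult_le_pos; [lra|left; apply Rinv_0_lt_compat; lra]). lra. }
      set (n := pnorm p (1, t)).
      assert (Hn : n ^ p = 1 + t ^ p).
      { unfold n. rewrite pnorm_pow by auto. unfold sp; simpl.
        rewrite Rabs_R1, pow1, (Rabs_pos_eq t) by lra. auto. }
      assert (Hnpos : 0 < n) by (apply pnorm_pos; auto; simpl; left; lra).
      assert (Hn2 : n <= 2).
      { destruct (Rle_lt_dec n 2) as [?|Hlt]; auto. exfalso.
        assert (t ^ p <= 1 ^ p) by (apply pow_incr; lra). rewrite pow1 in H0.
        destruct p as [|q]; [lia|].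
        pose proof (pow_lt_S 2 n q ltac:(lra) Hlt).
        assert (1 <= 2 ^ q) by (apply pow_R1_Rle; lra).
        change (2 ^ S q) with (2 * 2 ^ q) in H1. lra. }
      set (x0 := (/ n, t / n)).
      assert (Sx0 : sphere p x0).
      { unfold sphere. apply pnorm_of_sp1. unfold sp, x0; simpl.
        assert (0 < / n) by (apply Rinv_0_lt_compat; lra).
        rewrite !Rabs_pos_eq. unfold Rdiv. rewrite Rpow_mult_distr, pow_inv, Hn.
        field. assert (0 < 1 + t ^ p) by (pose proof (pow_le t p ltac:(lra)); lra). lra.
        unfold Rdiv. apply Rmult_le_pos; lra. lra. }
      assert (HT0 : pnorm p (app (Op t11 t12 t21 t22) x0) > 1 - delta).
      { rewrite hT. unfold sphere in Sx0. lra. }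
      destruct (H x0 Sx0 HT0) as [u [Su [Au [Hu _]]]].
      pose proof (pnorm_coord1 p _ Hp0 : Rabs (fst (vsub u x0)) <= _) as U1. simpl in U1.
      pose proof (pnorm_coord2 p _ Hp0 : Rabs (snd (vsub u x0)) <= _) as U2. simpl in U2.
      pose proof (pnorm_coord1 p _ Hp0 : Rabs (fst x0) <= _) as X1. simpl in X1.
      unfold sphere in Sx0. rewrite Sx0 in X1.
      destruct u as [u1 u2]. simpl in U1, U2.
      assert (Hal : 1 / 2 <= / n).
      { replace (1 / 2) with (/ 2) by field. apply Rinv_le_contravar; lra. }
      assert (Hau : / n <= 1) by (rewrite Rabs_pos_eq in X1; [lra|]; left; apply Rinv_0_lt_compat; lra).
      set (al := / n) in *.
      assert (Hbe : t / n = t * al) by (unfold al, Rdiv; ring).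
      rewrite Hbe in U2.
      assert (V1 := Rabs_def2 (u1 - al) eps ltac:(lra)).
      assert (V2 := Rabs_def2 (u2 - t * al) eps ltac:(lra)).
      assert (Htal : 1 / 4 <= t * al <= 1) by nra.
      assert (Pu1 : 1 / 4 < u1) by lra.
      assert (Pu2 : 0 < u2) by lra.
      assert (P1 : 0 < a * u1 + b * u2) by nra.
      assert (P2 : 0 < c * u1 + d * u2) by nra.
      assert (Eu : sp p (u1, u2) = 1) by (apply sp_of_pnorm1; auto).
      assert (EB : sp p (a * u1 + b * u2, c * u1 + d * u2) = 1).
      { apply sp_of_pnorm1; auto. rewrite <- Au. rewrite (HB (u1, u2)). reflexivity. }
      unfold sp in Eu, EB; simpl in Eu, EB.
      exists (u2 / u1). intros _. split; [|split; [|split]].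
      - apply root_from; auto. lra. lra.
      - replace (/ (u2 / u1)) with (u1 / u2) by (field; lra).
        apply root_from; auto; try lra.
        rewrite (Rplus_comm (b * u2)), (Rplus_comm (d * u2)), (Rplus_comm (Rabs u2 ^ p)). lra.
      - apply Rdiv_lt_0_compat; lra.
      - fold t. set (w := u2 - t * u1).
        assert (Ew : u2 / u1 - t = w / u1) by (unfold w; field; lra).
        assert (Wb : - (2 * eps) < w < 2 * eps) by (unfold w; nra).
        rewrite Ew. apply Rabs_def1.
        + apply (Rmult_lt_reg_r u1); [lra|]. unfold Rdiv.
          rewrite Rmult_assoc, Rinv_l, Rmult_1_r by lra. nra.
        + apply (Rmult_lt_reg_r u1); [lra|]. unfold Rdiv.
          rewrite Rmult_assoc, Rinv_l, Rmult_1_r by lra. nra. }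
    set (rt := fun k => proj1_sig (constructive_indefinite_description _ (Hex k))).
    assert (Hrt : forall k, (k <= p)%nat ->
              Qf p a b c d (rt k) = 0 /\ Qf p b a d c (/ rt k) = 0 /\ 0 < rt k /\
              Rabs (rt k - tk k) < / (4 * INR p)).
    { intros k Hk. unfold rt. destruct (constructive_indefinite_description _ (Hex k)) as [x Hx].
      simpl. auto. }
    assert (Hlt : forall i j, (j <= p)%nat -> (i < j)%nat -> rt i < rt j).
    { intros i j Hj Hij.
      destruct (Hrt i ltac:(lia)) as [_ [_ [_ Ai]]]. destruct (Hrt j Hj) as [_ [_ [_ Aj]]].
      apply Rabs_def2 in Ai. apply Rabs_def2 in Aj.
      assert (INR i + 1 <= INR j) by (rewrite <- S_INR; apply le_INR; lia).
      assert (tk j - tk i = (INR j - INR i) * (2 * / (4 * INR p))).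
      { unfold tk. field. lra. }
      assert (0 < / (4 * INR p)) by (apply Rinv_0_lt_compat; lra).
      nra. }
    assert (Hdist : forall i j, (i <= p)%nat -> (j <= p)%nat -> i <> j -> rt i <> rt j).
    { intros i j Hi Hj Hij E. destruct (Nat.lt_gt_cases i j) as [[L|L] _]; auto.
      - pose proof (Hlt i j Hj L). lra.
      - pose proof (Hlt j i Hi L). lra. }
    assert (QA : forall t, Qf p a b c d t = 0).
    { apply (poly_roots p _ rt (Qf_poly p a b c d)); auto.
      intros i Hi. apply (Hrt i Hi). }
    assert (QB : forall t, Qf p b a d c t = 0).
    { apply (poly_roots p _ (fun k => / rt k) (Qf_poly p b a d c)).
      - intros i Hi. apply (Hrt i Hi).
      - intros i j Hi Hj Hij E. apply (Hdist i j Hi Hj Hij).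
        rewrite <- (Rinv_inv (rt i)), <- (Rinv_inv (rt j)). rewrite E. auto. }
    pose proof (Qf_deriv p a b c d hp QA) as E1.
    pose proof (Qf_deriv p b a d c hp QB) as E2.
    pose proof (QA 0) as E3. pose proof (QB 0) as E4. unfold Qf in E3, E4.
    rewrite !Rmult_0_r, !Rplus_0_r, pow_i in E3, E4 by lia.
    destruct (final_alg p a b c d hp ltac:(lra) ltac:(lra) ltac:(apply Rabs_def1; lra)
                ltac:(apply Rabs_def1; lra) E1 E2 ltac:(lra) ltac:(lra)) as [-> [-> [-> ->]]].
    rewrite Ia, Ib, Ic, Id. f_equal; ring.
  - intros ->. split.
    + split.
      * intros x [v [Sv ->]]. rewrite hT. unfold sphere in Sv. lra.
      * intros bnd Hb. apply Hb. exists (1, 0). split; [apply sphere_e1; auto|].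
        rewrite hT. symmetry. apply sphere_e1; auto.
    + exists 1. split; [lra|]. intros x0 Sx0 _. exists x0. split; auto.
      split; [rewrite hT; auto|]. split.
      * rewrite pnorm_zero by (simpl; auto; ring). auto.
      * exists 0. split; [|auto]. split.
        -- intros x [v [Sv ->]]. rewrite pnorm_zero by (simpl; auto; ring). lra.
        -- intros bnd Hb. apply Hb. exists (1, 0). split; [apply sphere_e1; auto|].
           rewrite pnorm_zero by (simpl; auto; ring). auto.
Qed.
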